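(* In the Setting below, if $S$ is a sparse stretched ring then $S$ is a canonical stretched ring.
   Context: Setting: $(S,\mathfrak n)$ is a one-dimensional Noetherian local domain, not regular, with infinite residue field $k$ and quotient field $K$; its integral closure $\overline S$ in $K$ is a DVR and a finite $S$-module, with uniformizer $t$, and $S/\mathfrak n\to\overline S/t\overline S$ is an isomorphism. $\delta=\ell_S(\overline S/S)$, $\mathfrak C_I=I:_K\overline S$. An $\mathfrak n$-primary ideal $I$ is maximum sparse if $\ell_S(I/\mathfrak C_I)=\delta$. An Artinian local ring $(R,\mathfrak m)$ is stretched if $\ell_R(\mathfrak m^2/\mathfrak m^3)=1$. $S$ is a sparse stretched ring if there is a maximum sparse ideal $I\subseteq\mathfrak n^2$ with $S/I$ stretched; $S$ is a canonical stretched ring if there is an irreducible ideal $I\subseteq\mathfrak n^2$ (not an intersection of two strictly larger ideals) with $S/I$ a stretched Artinian local ring. *)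

(* Defs.v *)
(* The local domain S is modelled as a subring of its
   quotient field K (a predicate on K); ideals, S-submodules of K and
   lengths of subquotients of K are defined honestly below. *)
From mathcomp Require Import all_boot all_order all_algebra.
Set Implicit Arguments. Unset Strict Implicit. Unset Printing Implicit Defensive.
Import GRing.Theory.
Local Open Scope ring_scope.

Section Defs.
Variables (K : fieldType) (S : K -> Prop).

Definition subset_ (A B : K -> Prop) := forall x, A x -> B x.
Definition seteq (A B : K -> Prop) := forall x, A x <-> B x.
Definition ssubset (A B : K -> Prop) := subset_ A B /\ ~ subset_ B A.

Definition subring := S 0 /\ S 1 /\ (forall x y, S x -> S y -> S (x - y))
  /\ (forall x y, S x -> S y -> S (x * y)).

Definition submod (M : K -> Prop) := M 0 /\ (forall x y, M x -> M y -> M (x + y))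
  /\ (forall s x, S s -> M x -> M (s * x)).

Definition ideal (I : K -> Prop) := subset_ I S /\ submod I.

Definition spanS (l : seq K) (x : K) := exists cs : seq K, size cs = size l /\
  (forall i, (i < size cs)%N -> S cs`_i) /\ x = \sum_(i < size l) cs`_i * l`_i.

Definition idsum (I J : K -> Prop) (x : K) := exists a b, I a /\ J b /\ x = a + b.
Definition idmul (I J : K -> Prop) (x : K) := exists a b : seq K, size a = size b /\
  (forall i, (i < size a)%N -> I a`_i /\ J b`_i) /\ x = \sum_(i < size a) a`_i * b`_i.
Fixpoint idpow (I : K -> Prop) (k : nat) : K -> Prop :=
  if k is k'.+1 then idmul (idpow I k') I else S.

Definition prime_ideal (P : K -> Prop) := ideal P /\ ~ P 1 /\
  (forall a b, S a -> S b -> P (a * b) -> P a \/ P b).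

Definition nmax (x : K) := S x /\ (x != 0 -> ~ S x^-1).

Definition is_chain (N M : K -> Prop) (c : nat -> K -> Prop) (n : nat) :=
  seteq (c 0%N) N /\ seteq (c n) M /\ (forall i, (i <= n)%N -> submod (c i)) /\
  (forall i, (i < n)%N -> ssubset (c i) (c i.+1)).
Definition length_eq (N M : K -> Prop) (n : nat) :=
  (exists c, is_chain N M c n) /\ (forall c m, is_chain N M c m -> (m <= n)%N).

Definition Sbar (x : K) := exists p : {poly K}, p \is monic /\
  (forall i, S p`_i) /\ root p x.

Definition tSbar (t y : K) := exists z, Sbar z /\ y = t * z.

Definition setting (t : K) :=
  subring /\
  (forall x, exists a b, S a /\ S b /\ b != 0 /\ x = a / b) /\
  (* local: the non-units form an ideal *)
  ideal nmax /\
  (forall I, ideal I -> exists l : seq K, (forall i, (i < size l)%N -> I l`_i) /\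
       subset_ I (spanS l)) /\
  (* dimension one *)
  (exists x, nmax x /\ x != 0) /\
  (forall P, prime_ideal P -> (exists x, P x /\ x != 0) -> seteq P nmax) /\
  (* not regular: the maximal ideal is not principal *)
  ~ (exists g, S g /\ forall x, nmax x <-> exists s, S s /\ x = s * g) /\
  (* infinite residue field *)
  (forall l : seq K, (forall i, (i < size l)%N -> S l`_i) ->
     exists s, S s /\ forall i, (i < size l)%N -> ~ nmax (s - l`_i)) /\
  (* Sbar is a DVR with uniformizer t *)
  Sbar t /\ t != 0 /\ ~ Sbar t^-1 /\
  (forall x, x != 0 -> exists (u : K) (k : int), Sbar u /\ u != 0 /\ Sbar u^-1 /\
      x = u * t ^ k) /\
  (exists l : seq K, seteq Sbar (spanS l)) /\
  (* S/n -> Sbar/tSbar is an isomorphism *)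
  (forall x, Sbar x -> exists s, S s /\ tSbar t (x - s)) /\
  (forall s, S s -> (tSbar t s <-> nmax s)).

Definition conductor (I : K -> Prop) (x : K) := forall y, Sbar y -> I (x * y).

Definition n_primary (I : K -> Prop) := ideal I /\ ~ I 1 /\
  (forall a b, S a -> S b -> I (a * b) -> ~ I a -> exists k, I (b ^+ k)) /\
  (forall x, S x -> (nmax x <-> exists k, I (x ^+ k))).

Definition max_sparse (I : K -> Prop) := n_primary I /\
  exists d, length_eq S Sbar d /\ length_eq (conductor I) I d.

(* S/I is an Artinian local ring: I is a proper ideal and S/I has finite length *)
Definition artinian_local_quot (I : K -> Prop) := ideal I /\ ~ I 1 /\
  exists d, length_eq I S d.

(* S/I stretched: ell((m^2)/(m^3)) = 1 where m = n/I, i.e. ell_S((n^2+I)/(n^3+I)) = 1 *)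
Definition stretched_quot (I : K -> Prop) := artinian_local_quot I /\
  length_eq (idsum (idpow nmax 3%N) I) (idsum (idpow nmax 2%N) I) 1%N.

Definition irreducible_ideal (I : K -> Prop) := ideal I /\
  ~ (exists J1 J2, ideal J1 /\ ideal J2 /\ ssubset I J1 /\ ssubset I J2 /\
       seteq I (fun x => J1 x /\ J2 x)).

Definition sparse_stretched := exists I, max_sparse I /\
  subset_ I (idpow nmax 2%N) /\ stretched_quot I.

Definition canonical_stretched := exists I, irreducible_ideal I /\
  subset_ I (idpow nmax 2%N) /\ stretched_quot I.

End Defs.

(* Main.v *)
Require Import Defs.
From mathcomp Require Import all_boot all_order all_algebra.
From mathcomp Require Import ring zify.
From Stdlib Require Import Classical ClassicalEpsilon.
Set Implicit Arguments. Unset Strict Implicit. Unset Printing Implicit Defensive.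
Import GRing.Theory.
Local Open Scope ring_scope.


Lemma S_opp (K : fieldType) (S : K -> Prop) : subring S -> forall x, S x -> S (- x).
Proof. move=> [S0 [S1 [SB SM]]] x Sx. by rewrite -sub0r; apply: SB. Qed.
Lemma S_add (K : fieldType) (S : K -> Prop) : subring S -> forall x y, S x -> S y -> S (x + y).
Proof. move=> HS x y Sx Sy; rewrite -(opprK y); case: (HS) => [_ [_ [SB _]]]; apply: SB => //; exact: S_opp. Qed.
Lemma S_mul (K : fieldType) (S : K -> Prop) : subring S -> forall x y, S x -> S y -> S (x * y).
Proof. by move=> [_ [_ [_ SM]]]. Qed.
Lemma S_0 (K : fieldType) (S : K -> Prop) : subring S -> S 0.
Proof. by case. Qed.
Lemma S_1 (K : fieldType) (S : K -> Prop) : subring S -> S 1.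
Proof. by case=> _ []. Qed.
Lemma S_sum (K : fieldType) (S : K -> Prop) (HS : subring S) (I : Type) (r : seq I) (P : pred I) (F : I -> K) :
  (forall i, P i -> S (F i)) -> S (\sum_(i <- r | P i) F i).
Proof. move=> H; apply: big_ind => //; [exact: S_0 | exact: S_add]. Qed.
Lemma S_prod (K : fieldType) (S : K -> Prop) (HS : subring S) (I : Type) (r : seq I) (P : pred I) (F : I -> K) :
  (forall i, P i -> S (F i)) -> S (\prod_(i <- r | P i) F i).
Proof. move=> H; apply: big_ind => //; [exact: S_1 | exact: S_mul]. Qed.
Lemma S_nat (K : fieldType) (S : K -> Prop) (HS : subring S) n : S (n%:R).
Proof. elim: n => [|n IH]; first exact: S_0. by rewrite -addn1 natrD; apply: S_add => //; exact: S_1. Qed.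
Lemma S_muln (K : fieldType) (S : K -> Prop) (HS : subring S) x n : S x -> S (x *+ n).
Proof. by move=> Sx; rewrite -mulr_natr; apply: S_mul => //; exact: S_nat. Qed.

Definition PS (K : fieldType) (S : K -> Prop) (p : {poly K}) := forall i, S p`_i.

Lemma PS_add (K : fieldType) (S : K -> Prop) (HS : subring S) p q : PS S p -> PS S q -> PS S (p + q).
Proof. by move=> Hp Hq i; rewrite coefD; apply: S_add. Qed.
Lemma PS_opp (K : fieldType) (S : K -> Prop) (HS : subring S) p : PS S p -> PS S (- p).
Proof. by move=> Hp i; rewrite coefN; apply: S_opp. Qed.
Lemma PS_mul (K : fieldType) (S : K -> Prop) (HS : subring S) p q : PS S p -> PS S q -> PS S (p * q).
Proof. move=> Hp Hq i; rewrite coefM; apply: S_sum => // j _; exact: S_mul. Qed.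
Lemma PS_C (K : fieldType) (S : K -> Prop) (HS : subring S) c : S c -> PS S c%:P.
Proof. move=> Sc i; rewrite coefC; case: eqP => _ //; exact: S_0. Qed.
Lemma PS_X (K : fieldType) (S : K -> Prop) (HS : subring S) : PS S 'X.
Proof. move=> i; rewrite coefX; exact: S_nat. Qed.
Lemma PS_0 (K : fieldType) (S : K -> Prop) (HS : subring S) : PS S 0.
Proof. move=> i; rewrite coef0; exact: S_0. Qed.
Lemma PS_1 (K : fieldType) (S : K -> Prop) (HS : subring S) : PS S 1.
Proof. move=> i; rewrite coef1; exact: S_nat. Qed.
Lemma PS_muln (K : fieldType) (S : K -> Prop) (HS : subring S) p n : PS S p -> PS S (p *+ n).
Proof. move=> Hp i; rewrite coefMn; exact: S_muln. Qed.

Lemma dettrick (K : fieldType) (S : K -> Prop) (HS : subring S) n (g : 'I_n -> K) (A : 'M[K]_n) z :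
  (forall i j, S (A i j)) -> (exists i, g i != 0) ->
  (forall j, z * g j = \sum_i g i * A i j) -> Sbar S z.
Proof.
move=> SA [i0 gi0] Hg.
exists (char_poly A); split; first exact: char_poly_monic.
split.
  suff: PS S (char_poly A) by [].
  rewrite /char_poly /char_poly_mx /determinant.
  apply: big_ind; [exact: PS_0 HS | exact: PS_add HS |] => s _.
  apply: (PS_mul HS).
    case: (perm.odd_perm s) => /=; rewrite ?expr1 ?expr0;
      [apply: (PS_opp HS); exact: (PS_1 HS) | exact: (PS_1 HS)].
  apply: big_ind; [exact: PS_1 HS | exact: PS_mul HS |] => i _.
  rewrite !mxE; apply: (PS_add HS); first by apply: (PS_muln HS); exact: (PS_X HS).
  by apply: (PS_opp HS); apply: (PS_C HS).
rewrite /root; have -> : (char_poly A).[z] = \det (z%:M - A).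
  rewrite /char_poly -horner_evalE -det_map_mx; congr (determinant _); apply/matrixP => i j.
  by rewrite !mxE /= horner_evalE hornerD hornerN hornerMn hornerX hornerC.
apply/det0P; exists (\row_i g i).
  apply/eqP => /matrixP /(_ 0 i0); rewrite !mxE => E; by rewrite E eqxx in gi0.
apply/rowP => j; rewrite mulmxBr mul_mx_scalar !mxE Hg; apply/eqP; rewrite subr_eq0; apply/eqP; apply: eq_bigr => i _; by rewrite mxE.
Qed.

Lemma dettrick_fin (K : fieldType) (S : K -> Prop) (HS : subring S) (I : finType) (g : I -> K)
  (A : I -> I -> K) z :
  (forall i j, S (A i j)) -> (exists i, g i != 0) ->
  (forall j, z * g j = \sum_i g i * A i j) -> Sbar S z.
Proof.
move=> SA [i0 gi0] Hg.
apply: (dettrick HS (g := fun k => g (enum_val k))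
   (A := \matrix_(k, l) A (enum_val k) (enum_val l))).
- by move=> i j; rewrite mxE.
- by exists (enum_rank i0); rewrite enum_rankK.
- move=> j; rewrite Hg.
  rewrite (big_enum_val (A := I) (fun i => g i * A i (enum_val j))).
  by apply: eq_bigr => k _; rewrite mxE.
Qed.

Definition span (K : fieldType) (S : K -> Prop) (I : finType) (g : I -> K) (x : K) :=
  exists f : I -> K, (forall i, S (f i)) /\ x = \sum_i f i * g i.

Lemma span_gen (K : fieldType) (S : K -> Prop) (HS : subring S) (I : finType) (g : I -> K) i :
  span S g (g i).
Proof.
exists (fun j => (j == i)%:R); split; first by move=> j; exact: S_nat.
rewrite (bigD1 i) //= eqxx mul1r big1 ?addr0 // => j /negPf ->; by rewrite mul0r.
Qed.

Lemma span_0 (K : fieldType) (S : K -> Prop) (HS : subring S) (I : finType) (g : I -> K) :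
  span S g 0.
Proof.
exists (fun _ => 0); split; first by move=> _; exact: S_0.
by rewrite big1 // => j _; rewrite mul0r.
Qed.

Lemma span_add (K : fieldType) (S : K -> Prop) (HS : subring S) (I : finType) (g : I -> K) x y :
  span S g x -> span S g y -> span S g (x + y).
Proof.
move=> [f [Sf ->]] [h [Sh ->]]; exists (fun i => f i + h i); split.
  by move=> i; apply: S_add.
by rewrite -big_split; apply: eq_bigr => i _; rewrite mulrDl.
Qed.

Lemma span_scale (K : fieldType) (S : K -> Prop) (HS : subring S) (I : finType) (g : I -> K) s x :
  S s -> span S g x -> span S g (s * x).
Proof.
move=> Ss [f [Sf ->]]; exists (fun i => s * f i); split.
  by move=> i; apply: S_mul.
by rewrite mulr_sumr; apply: eq_bigr => i _; rewrite mulrA.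
Qed.

Lemma span_sum (K : fieldType) (S : K -> Prop) (HS : subring S) (I : finType) (g : I -> K)
  (J : Type) (r : seq J) (P : pred J) (F : J -> K) :
  (forall j, P j -> span S g (F j)) -> span S g (\sum_(j <- r | P j) F j).
Proof. move=> H; apply: big_ind => //; [exact: span_0 | exact: span_add]. Qed.

Lemma span_mulclosed (K : fieldType) (S : K -> Prop) (HS : subring S) (I : finType) (g : I -> K) z :
  (forall i, span S g (z * g i)) -> forall x, span S g x -> span S g (z * x).
Proof.
move=> Hz x [f [Sf ->]]; rewrite mulr_sumr; apply: span_sum => // i _.
by rewrite mulrCA; apply: span_scale.
Qed.

Lemma span_integral (K : fieldType) (S : K -> Prop) (HS : subring S) (I : finType) (g : I -> K) z :
  (exists i, g i != 0) -> (forall x, span S g x -> span S g (z * x)) -> Sbar S z.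
Proof.
move=> gnz Hz.
have H : forall j, { f : I -> K | (forall i, S (f i)) /\ z * g j = \sum_i f i * g i }.
  move=> j; apply: constructive_indefinite_description; apply: Hz; exact: span_gen.
apply: (dettrick_fin HS (g := g) (A := fun i j => sval (H j) i)) => //.
- by move=> i j; exact: (proj1 (svalP (H j)) i).
- move=> j; have E := proj2 (svalP (H j)); apply: (etrans E); apply: eq_bigr => i _; exact: mulrC.
Qed.

Lemma monic_span (K : fieldType) (S : K -> Prop) (HS : subring S) (p : {poly K}) x :
  p \is monic -> PS S p -> root p x ->
  exists n, (0 < n)%N /\ forall k, span S (fun i : 'I_n => x ^+ i) (x ^+ k).
Proof.
move=> mp Sp rp.
have sz : (1 < size p)%N.
  rewrite ltnNge; apply/negP => /size1_polyC E.
  move: (mp); rewrite E monicE lead_coefC => /eqP E1.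
  by move: rp; rewrite E E1 /root hornerC oner_eq0.
have lc : lead_coef p = 1 by apply/monicP.
move: rp; rewrite /root horner_coef /lead_coef in lc *.
move Esz: (size p) sz lc => sp; case: sp Esz => [|n] Esz // sz lc /eqP.
rewrite big_ord_recr /= lc mul1r => E.
exists n; split; first by case: n sz {E lc Esz}.
have Hn : span S (fun i : 'I_n => x ^+ i) (x ^+ n).
  exists (fun i : 'I_n => - p`_i); split; first by move=> i; apply: S_opp.
  have -> : x ^+ n = - \sum_(i < n) p`_(widen_ord (leqnSn n) i) * x ^+ (widen_ord (leqnSn n) i).
    by apply/eqP; rewrite -addr_eq0 addrC E.
  by rewrite -sumrN; apply: eq_bigr => i _; rewrite mulNr.
have Hx : forall i : 'I_n, span S (fun i : 'I_n => x ^+ i) (x * x ^+ i).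
  move=> i; rewrite -exprS; case: (ltnP i.+1 n) => h.
    exact: (span_gen HS (fun i : 'I_n => x ^+ i) (Ordinal h)).
  have -> : i.+1 = n by apply/eqP; rewrite eqn_leq h ltn_ord.
  exact: Hn.
elim=> [|k IH].
  case: n {Esz lc} sz E Hn Hx => // n _ _ _ _.
  exact: (span_gen HS (fun i : 'I_n.+1 => x ^+ i) ord0).
by rewrite exprS; apply: span_mulclosed.
Qed.

Lemma SB_ops (K : fieldType) (S : K -> Prop) (HS : subring S) x y :
  Sbar S x -> Sbar S y -> Sbar S (x * y) /\ Sbar S (x + y) /\ Sbar S (- x).
Proof.
move=> [p [mp [Sp rp]]] [q [mq [Sq rq]]].
have [n [n0 Hxn]] := monic_span HS mp Sp rp.
have [m [m0 Hym]] := monic_span HS mq Sq rq.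
pose g := fun ij : ('I_n * 'I_m)%type => x ^+ ij.1 * y ^+ ij.2.
have gnz : exists ij, g ij != 0.
  by exists (Ordinal n0, Ordinal m0); rewrite /g /= mulr1 oner_eq0.
have Hx : forall w, span S g w -> span S g (x * w).
  apply: span_mulclosed => // -[i j]; rewrite /g /= mulrA -exprS.
  have [f [Sf ->]] := Hxn i.+1; rewrite mulr_suml; apply: span_sum => // k _.
  rewrite -mulrA; apply: span_scale => //.
  exact: (span_gen HS g (k, j)).
have Hy : forall w, span S g w -> span S g (y * w).
  apply: span_mulclosed => // -[i j]; rewrite /g /= mulrCA -exprS.
  have [f [Sf ->]] := Hym j.+1; rewrite mulr_sumr; apply: span_sum => // k _.
  rewrite mulrCA; apply: span_scale => //.
  exact: (span_gen HS g (i, k)).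
split; first by apply: (span_integral HS gnz) => w Hw; rewrite -mulrA; apply: Hx; apply: Hy.
split; first by apply: (span_integral HS gnz) => w Hw; rewrite mulrDl; apply: span_add => //; [apply: Hx | apply: Hy].
apply: (span_integral HS gnz) => w Hw; rewrite mulNr -mulN1r; apply: span_scale => //.
  apply: S_opp => //; exact: S_1.
by apply: Hx.
Qed.

Lemma S_SB (K : fieldType) (S : K -> Prop) (HS : subring S) s : S s -> Sbar S s.
Proof.
move=> Ss; exists ('X - s%:P); split; first exact: monicXsubC.
split; last by rewrite root_XsubC.
move=> i; rewrite coefB coefX coefC; apply: S_add => //; first exact: S_nat.
apply: S_opp => //; case: eqP => _ //; exact: S_0.
Qed.


Definition vsetup (K : fieldType) (S : K -> Prop) (t : K) :=
  subring S /\ Sbar S t /\ t != 0 /\ ~ Sbar S t^-1 /\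
  (forall x, x != 0 -> exists (u : K) (k : int), Sbar S u /\ u != 0 /\ Sbar S u^-1 /\
      x = u * t ^ k) /\
  (forall x, Sbar S x -> exists s, S s /\ tSbar S t (x - s)).

Definition T (K : fieldType) (S : K -> Prop) (t : K) (j : nat) (x : K) := Sbar S (x / t ^+ j).


Lemma SB_mul (K : fieldType) (S : K -> Prop) t (H : vsetup S t) x y : Sbar S x -> Sbar S y -> Sbar S (x * y).
Proof. by case: H => HS _ Hx Hy; case: (SB_ops HS Hx Hy). Qed.
Lemma SB_add (K : fieldType) (S : K -> Prop) t (H : vsetup S t) x y : Sbar S x -> Sbar S y -> Sbar S (x + y).
Proof. by case: H => HS _ Hx Hy; case: (SB_ops HS Hx Hy) => _ []. Qed.
Lemma SB_opp (K : fieldType) (S : K -> Prop) t (H : vsetup S t) x : Sbar S x -> Sbar S (- x).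
Proof. by case: H => HS _ Hx; case: (SB_ops HS Hx Hx) => _ []. Qed.
Lemma SB_sub (K : fieldType) (S : K -> Prop) t (H : vsetup S t) x y : Sbar S x -> Sbar S y -> Sbar S (x - y).
Proof. move=> Hx Hy; apply: (SB_add H) => //; exact: (SB_opp H). Qed.
Lemma SB_S (K : fieldType) (S : K -> Prop) t (H : vsetup S t) x : S x -> Sbar S x.
Proof. by case: H => HS _; apply: S_SB. Qed.
Lemma SB_t (K : fieldType) (S : K -> Prop) t (H : vsetup S t) : Sbar S t.
Proof. by case: H => _ []. Qed.
Lemma SB_tn (K : fieldType) (S : K -> Prop) t (H : vsetup S t) n : Sbar S (t ^+ n).
Proof.
elim: n => [|n IH]; first by apply: (SB_S H); case: H => HS _; exact: S_1.
by rewrite exprS; apply: (SB_mul H) => //; exact: (SB_t H).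
Qed.
Lemma t_neq0 (K : fieldType) (S : K -> Prop) t (H : vsetup S t) : t != 0.
Proof. by case: H => _ [_ []]. Qed.
Lemma tn_neq0 (K : fieldType) (S : K -> Prop) t (H : vsetup S t) n : t ^+ n != 0.
Proof. by rewrite expf_neq0 // (t_neq0 H). Qed.
Lemma ti_notSB (K : fieldType) (S : K -> Prop) t (H : vsetup S t) : ~ Sbar S t^-1.
Proof. by case: H => _ [_ [_ []]]. Qed.

Lemma T0E (K : fieldType) (S : K -> Prop) t x : T S t 0 x <-> Sbar S x.
Proof. by rewrite /T expr0 divr1. Qed.

Lemma T_mulSB (K : fieldType) (S : K -> Prop) t (H : vsetup S t) j x y :
  T S t j x -> Sbar S y -> T S t j (x * y).
Proof. by move=> Hx Hy; rewrite /T mulrAC; apply: (SB_mul H). Qed.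
Lemma T_SBmul (K : fieldType) (S : K -> Prop) t (H : vsetup S t) j x y :
  T S t j x -> Sbar S y -> T S t j (y * x).
Proof. by move=> Hx Hy; rewrite mulrC; apply: (T_mulSB H). Qed.
Lemma T_Smul (K : fieldType) (S : K -> Prop) t (H : vsetup S t) j x s :
  T S t j x -> S s -> T S t j (s * x).
Proof. by move=> Hx Hs; apply: (T_SBmul H) => //; exact: (SB_S H). Qed.
Lemma T_add (K : fieldType) (S : K -> Prop) t (H : vsetup S t) j x y :
  T S t j x -> T S t j y -> T S t j (x + y).
Proof. by move=> Hx Hy; rewrite /T mulrDl; apply: (SB_add H). Qed.
Lemma T_opp (K : fieldType) (S : K -> Prop) t (H : vsetup S t) j x :
  T S t j x -> T S t j (- x).
Proof. by move=> Hx; rewrite /T mulNr; apply: (SB_opp H). Qed.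
Lemma T_sub (K : fieldType) (S : K -> Prop) t (H : vsetup S t) j x y :
  T S t j x -> T S t j y -> T S t j (x - y).
Proof. by move=> Hx Hy; apply: (T_add H) => //; apply: (T_opp H). Qed.
Lemma T_0 (K : fieldType) (S : K -> Prop) t (H : vsetup S t) j : T S t j 0.
Proof. by rewrite /T mul0r; apply: (SB_S H); case: H => HS _; exact: S_0. Qed.
Lemma T_tn (K : fieldType) (S : K -> Prop) t (H : vsetup S t) j : T S t j (t ^+ j).
Proof. by rewrite /T divff ?(tn_neq0 H) //; apply: (SB_S H); case: H => HS _; exact: S_1. Qed.
Lemma T_mul (K : fieldType) (S : K -> Prop) t (H : vsetup S t) a b x y :
  T S t a x -> T S t b y -> T S t (a + b) (x * y).
Proof.
move=> Hx Hy; rewrite /T exprD invfM mulrACA; exact: (SB_mul H).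
Qed.
Lemma T_S1 (K : fieldType) (S : K -> Prop) t (H : vsetup S t) j x : T S t j.+1 x -> T S t j x.
Proof.
move=> Hx; rewrite /T.
have -> : x / t ^+ j = t * (x / t ^+ j.+1).
  have t0 := t_neq0 H; have tj := tn_neq0 H j.
  rewrite exprS; field; rewrite t0 tj //.
by apply: (SB_mul H) => //; exact: (SB_t H).
Qed.
Lemma T_le (K : fieldType) (S : K -> Prop) t (H : vsetup S t) i j x : (i <= j)%N -> T S t j x -> T S t i x.
Proof.
move=> /subnK <-; elim: (j - i)%N => [|k IH] //= Hx; apply: IH; exact: (T_S1 H).
Qed.

Lemma fac_nat (K : fieldType) (S : K -> Prop) t (H : vsetup S t) x : x != 0 ->
  exists u, Sbar S u /\ u != 0 /\ Sbar S u^-1 /\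
   ((exists n, x = u * t ^+ n) \/ (exists n, x = u / t ^+ n.+1)).
Proof.
move=> x0; case: (H) => _ [_ [_ [_ [FAC _]]]].
have [u [k [Hu [u0 [Hui E]]]]] := FAC x x0.
exists u; do 3!split => //; case: k E => n E; rewrite /exprz in E.
  by left; exists n.
by right; exists n.
Qed.

Lemma unit_lemma (K : fieldType) (S : K -> Prop) t (H : vsetup S t) b :
  Sbar S b -> ~ T S t 1 b -> b != 0 /\ Sbar S b^-1.
Proof.
move=> Hb Hb1.
have b0 : b != 0 by apply/eqP => E; apply: Hb1; rewrite E; exact: (T_0 H).
split => //.
have t0 := t_neq0 H.
have [u [Hu [u0 [Hui [[n E]|[n E]]]]]] := fac_nat H b0.
  case: n E => [|n] E; first by rewrite E expr0 mulr1.
  exfalso; apply: Hb1; rewrite /T.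
  have -> : b / t ^+ 1 = u * t ^+ n by rewrite E exprS expr1; field; rewrite t0.
  by apply: (SB_mul H) => //; exact: (SB_tn H).
exfalso; apply: (ti_notSB H).
have -> : t^-1 = b * u^-1 * t ^+ n.
  have tn := tn_neq0 H n.
  by rewrite E exprS; field; rewrite u0 tn t0.
by apply: (SB_mul H); [apply: (SB_mul H) | exact: (SB_tn H)].
Qed.

Lemma val_fin (K : fieldType) (S : K -> Prop) t (H : vsetup S t) x :
  x != 0 -> exists N, ~ T S t N x.
Proof.
move=> x0; have t0 := t_neq0 H.
have [u [Hu [u0 [Hui [[n E]|[n E]]]]]] := fac_nat H x0.
  exists n.+1 => Hx; apply: (ti_notSB H).
  have -> : t^-1 = (x / t ^+ n.+1) * u^-1.
    have tn := tn_neq0 H n.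
    by rewrite E exprS; field; rewrite u0 tn t0.
  exact: (SB_mul H).
exists 0%N => /T0E Hx; apply: (ti_notSB H).
have -> : t^-1 = x * u^-1 * t ^+ n.
  have tn := tn_neq0 H n.
  by rewrite E exprS; field; rewrite u0 tn t0.
by apply: (SB_mul H); [apply: (SB_mul H) | exact: (SB_tn H)].
Qed.

Lemma exact_exists (K : fieldType) (S : K -> Prop) t (H : vsetup S t) N x :
  T S t 0 x -> ~ T S t N x -> exists j, (j < N)%N /\ T S t j x /\ ~ T S t j.+1 x.
Proof.
elim: N => [|N IH] H0 HN; first by [].
case: (classic (T S t N x)) => HNx.
  by exists N.
have [j [jN Hj]] := IH H0 HNx; exists j; split => //; exact: ltnW.
Qed.

Lemma T1_shift (K : fieldType) (S : K -> Prop) t (H : vsetup S t) j x :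
  T S t 1 (x / t ^+ j) <-> T S t j.+1 x.
Proof.
rewrite /T; have -> // : x / t ^+ j / t ^+ 1 = x / t ^+ j.+1.
have t0 := t_neq0 H; have tn := tn_neq0 H j.
by rewrite expr1 exprS; field; rewrite t0 tn.
Qed.

Lemma residue (K : fieldType) (S : K -> Prop) t (H : vsetup S t) j x p :
  T S t j x -> ~ T S t j.+1 x -> T S t j p -> ~ T S t j.+1 p ->
  exists s, S s /\ T S t j.+1 (x - s * p).
Proof.
move=> Hx Hx1 Hp Hp1.
have Hb1 : ~ T S t 1 (p / t ^+ j) by move/(T1_shift H).
have [b0 Hbi] := unit_lemma H Hp Hb1.
case: (H) => _ [_ [_ [_ [_ RES]]]].
have [s [Ss [z [Hz E]]]] := RES (x / t ^+ j * (p / t ^+ j)^-1) (SB_mul H Hx Hbi).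
exists s; split => //.
have Es : s = x / t ^+ j * (p / t ^+ j)^-1 - t * z by rewrite -E opprB addrC subrK.
rewrite /T.
have -> : (x - s * p) / t ^+ j.+1 = (p / t ^+ j) * z.
  have t0 := t_neq0 H; have tn := tn_neq0 H j.
  have p0 : p != 0 by apply: contraNneq b0 => ->; rewrite mul0r.
  rewrite Es exprS; field; rewrite t0 tn p0 //.
exact: (SB_mul H).
Qed.

Lemma exact_mul (K : fieldType) (S : K -> Prop) t (H : vsetup S t) a b x y :
  T S t a x -> ~ T S t a.+1 x -> T S t b y -> ~ T S t b.+1 y ->
  T S t (a + b) (x * y) /\ ~ T S t (a + b).+1 (x * y).
Proof.
move=> Hx Hx1 Hy Hy1; split; first exact: (T_mul H).
move=> Hxy.
have [u0 Hui] := unit_lemma H Hx (fun h => Hx1 ((T1_shift H a x).1 h)).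
have [w0 Hwi] := unit_lemma H Hy (fun h => Hy1 ((T1_shift H b y).1 h)).
apply: (ti_notSB H).
have -> : t^-1 = (x * y / t ^+ (a + b).+1) * (x / t ^+ a)^-1 * (y / t ^+ b)^-1.
  have t0 := t_neq0 H; have ta := tn_neq0 H a; have tb := tn_neq0 H b.
  have x0 : x != 0 by apply: contraNneq u0 => ->; rewrite mul0r.
  have y0 : y != 0 by apply: contraNneq w0 => ->; rewrite mul0r.
  rewrite exprS exprD; field; rewrite t0 ta tb x0 y0 //.
by apply: (SB_mul H) => //; apply: (SB_mul H).
Qed.


Definition pb (P : Prop) : bool := if excluded_middle_informative P then true else false.
Lemma pbP (P : Prop) : reflect P (pb P).
Proof. rewrite /pb; case: excluded_middle_informative => h; by constructor. Qed.

Lemma card_sum (n : nat) (P : 'I_n -> bool) : #|[set j : 'I_n | P j]| = (\sum_(j < n) P j)%N.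
Proof.
rewrite -sum1_card big_mkcond /=; apply: eq_bigr => j _; rewrite inE; by case: (P j).
Qed.

Lemma chain_transport (K : fieldType) (S : K -> Prop) N M N' M' ch m :
  is_chain S N M ch m -> seteq N N' -> seteq M M' -> is_chain S N' M' ch m.
Proof.
move=> [h0 [hm [hs hst]]] E1 E2; split; last split => //.
  by move=> x; rewrite h0 E1.
by move=> x; rewrite hm E2.
Qed.

Lemma mono_chain (K : fieldType) (S : K -> Prop) (f : nat -> K -> Prop) :
  (forall i, submod S (f i)) -> (forall i, subset_ (f i) (f i.+1)) ->
  forall n, exists ch m, is_chain S (f 0%N) (f n) ch m /\
    (\sum_(i < n) pb (~ subset_ (f i.+1) (f i)) <= m)%N.
Proof.
move=> fs fm; elim=> [|n [ch [m [[h0 [hm [hs hst]]] hsum]]]].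
  exists (fun _ => f 0%N), 0%N; split; last by rewrite big_ord0.
  by split; [|split; [|split]] => //.
rewrite big_ord_recr /=.
case: (pbP (~ subset_ (f n.+1) (f n))) => hstep.
  exists (fun i => if (i <= m)%N then ch i else f n.+1), m.+1; split; last by rewrite addn1.
  split; first by rewrite leq0n.
  split; first by rewrite ltnn.
  split.
    move=> i _; case: ifP => // hi; exact: hs.
  move=> i hi; rewrite ltnS in hi; rewrite hi; case: (leqP i.+1 m) => hi1.
    exact: hst.
  have -> : i = m by apply/eqP; rewrite eqn_leq hi -ltnS hi1.
  split.
    by move=> x /hm hx; apply: fm.
  by move=> H; apply: hstep => x /H /hm.
exists ch, m; split; last by rewrite addn0.
split => //; split => // x; rewrite hm; split; first exact: fm.
by move=> hx; apply: NNPP => hn; apply: hstep => h; apply: hn; apply: h.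
Qed.

Lemma chain_mono (K : fieldType) (S : K -> Prop) N M ch m :
  is_chain S N M ch m -> forall i k, (i + k <= m)%N -> subset_ (ch i) (ch (i + k)%N).
Proof.
move=> [_ [_ [_ hst]]] i; elim=> [|k IH] hk x; first by rewrite addn0.
move=> hx; rewrite addnS in hk *; apply: (proj1 (hst _ hk)); exact: (IH (ltnW hk) x hx).
Qed.

Definition Vp (K : fieldType) (S : K -> Prop) t (P : K -> Prop) (j : nat) :=
  exists x, P x /\ T S t j x /\ ~ T S t j.+1 x.
Definition Vset (K : fieldType) (S : K -> Prop) t (P : K -> Prop) (c : nat) : {set 'I_c} :=
  [set j : 'I_c | pb (Vp S t P j)].

Lemma vsub (K : fieldType) (S : K -> Prop) t (P Q : K -> Prop) c :
  subset_ P Q -> Vset S t P c \subset Vset S t Q c.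
Proof.
move=> PQ; apply/subsetP => j; rewrite !inE => /pbP [x [Px Hx]]; apply/pbP.
by exists x; split => //; apply: PQ.
Qed.

Lemma submod_sub (K : fieldType) (S : K -> Prop) (HS : subring S) (P : K -> Prop) x y :
  submod S P -> P x -> P y -> forall s, S s -> P (x - s * y).
Proof.
move=> [P0 [Padd Pm]] Px Py s Ss; rewrite -mulNr; apply: Padd => //; apply: Pm => //.
exact: S_opp.
Qed.

Lemma vdescent (K : fieldType) (S : K -> Prop) t (H : vsetup S t) (P Q : K -> Prop) c :
  submod S P -> submod S Q -> subset_ P Q -> (forall x, T S t c x -> P x) ->
  (forall x, Q x -> Sbar S x) -> Vset S t Q c \subset Vset S t P c -> subset_ Q P.
Proof.
move=> sP sQ PQ TcP QSB /subsetP VQP.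
have HS : subring S by case: H.
suff: forall n, (n <= c)%N -> forall x, Q x -> T S t (c - n) x -> P x.
  by move=> Hn x Qx; apply: (Hn c (leqnn c)) => //; rewrite subnn; apply/T0E; exact: QSB.
elim=> [|n IH] hn x Qx Hx; first by apply: TcP; rewrite subn0 in Hx.
have hn' : (n <= c)%N by exact: ltnW.
case: (classic (T S t (c - n) x)) => Hx1; first exact: IH.
have jc : (c - n.+1 < c)%N by lia.
have Ej : (c - n.+1).+1 = (c - n)%N by lia.
have : Ordinal jc \in Vset S t Q c by rewrite inE; apply/pbP; exists x; rewrite Ej.
move/VQP; rewrite inE => /pbP [p [Pp [Hp Hp1]]].
have Hx1' : ~ T S t (c - n.+1).+1 x by rewrite Ej.
have Hx' : T S t (c - n.+1) x by [].
have [s [Ss Hs]] := residue H Hx' Hx1' Hp Hp1.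
rewrite Ej in Hs.
have Hq : P (x - s * p) by apply: IH => //; apply: (submod_sub HS sQ) => //; exact: PQ.
have -> : x = (x - s * p) - (- 1) * (s * p) by rewrite mulN1r opprK subrK.
apply: (submod_sub HS sP) => //; first by case: sP => _ [_ Pm]; apply: Pm.
apply: S_opp => //; exact: S_1.
Qed.

Lemma chainV (K : fieldType) (S : K -> Prop) t (H : vsetup S t) N M ch d c :
  is_chain S N M ch d -> (forall x, T S t c x -> N x) -> (forall x, M x -> Sbar S x) ->
  (d <= #|Vset S t M c|)%N.
Proof.
move=> Hch TN MSB.
have Hmono := chain_mono Hch.
case: (Hch) => [h0 [hd [hs hst]]].
suff: forall i, (i <= d)%N -> (i <= #|Vset S t (ch i) c|)%N.
  move=> /(_ d (leqnn d)) Hd; apply: (leq_trans Hd); apply: subset_leq_card.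
  by apply: vsub => x /hd.
elim=> [|i IH] hi //.
have hi' : (i <= d)%N by exact: ltnW.
apply: (leq_ltn_trans (IH hi')); apply: proper_card; rewrite properE.
have [sub nsub] := hst i hi.
rewrite vsub //=; apply/negP => Hsub.
apply: nsub; apply: (vdescent H (hs _ hi') (hs _ hi) sub) => //.
- move=> x /TN /h0 hx; have := Hmono 0%N i; rewrite add0n => /(_ hi'); exact.
- move=> x hx; apply: MSB; apply/hd; have := Hmono i.+1 (d - i.+1)%N.
  rewrite subnKC // => /(_ (leqnn d)); exact.
exact: Hsub.
Qed.

Lemma gapchain (K : fieldType) (S : K -> Prop) t (H : vsetup S t) c d :
  (forall x, T S t c x -> S x) ->
  (forall ch m, is_chain S S (Sbar S) ch m -> (m <= d)%N) ->
  (#|[set j : 'I_c | pb (~ Vp S t S j)]| <= d)%N.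
Proof.
move=> TcS Hd.
have HS : subring S by case: H.
pose f := fun (i : nat) (x : K) => exists a b, S a /\ T S t (c - i) b /\ x = a + b.
have fs : forall i, submod S (f i).
  move=> i; split; first by exists 0, 0; rewrite addr0; split; [exact: S_0|split=> //; exact: T_0].
  split.
    move=> x y [a [b [Sa [Tb ->]]]] [a' [b' [Sa' [Tb' ->]]]].
    exists (a + a'), (b + b'); split; first exact: S_add.
    by split; [apply: (T_add H) | rewrite addrACA].
  move=> s x Ss [a [b [Sa [Tb ->]]]]; exists (s * a), (s * b); split; first exact: S_mul.
  by split; [apply: (T_Smul H) | rewrite mulrDr].
have fm : forall i, subset_ (f i) (f i.+1).
  move=> i x [a [b [Sa [Tb ->]]]]; exists a, b; split => //; split => //.
  apply: (T_le H) Tb; lia.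
have [ch [m [Hch Hsum]]] := mono_chain fs fm c.
have Hch' : is_chain S S (Sbar S) ch m.
  apply: (chain_transport Hch).
    move=> x; split.
      move=> [a [b [Sa [Tb ->]]]]; apply: S_add => //; apply: TcS; by rewrite subn0 in Tb.
    by move=> Sx; exists x, 0; rewrite addr0; split => //; split => //; exact: T_0.
  move=> x; split.
    move=> [a [b [Sa [Tb ->]]]]; apply: (SB_add H); first exact: (SB_S H).
    by rewrite subnn in Tb; exact: (proj1 (T0E S t b) Tb).
  by move=> Sx; exists 0, x; rewrite add0r; split; [exact: S_0|split=> //; rewrite subnn; exact/T0E].
apply: (leq_trans _ (Hd _ _ Hch')); apply: (leq_trans _ Hsum).
rewrite card_sum (reindex_inj rev_ord_inj) /=; apply: leq_sum => i _.
case: (pbP (~ Vp S t S (rev_ord i))) => //= hgap.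
case: (pbP (~ subset_ (f i.+1) (f i))) => //= hstep; exfalso; apply: hstep => hsub.
set j := (c - i.+1)%N.
have Ej1 : (c - i)%N = j.+1 by rewrite /j; have := ltn_ord i; lia.
have : f i.+1 (t ^+ j) by exists 0, (t ^+ j); rewrite add0r; split; [exact: S_0|split=> //; exact: T_tn].
move/hsub => [a [b [Sa [Tb Eab]]]]; rewrite Ej1 in Tb.
apply: hgap; exists a; split => //.
have -> : a = t ^+ j - b by rewrite Eab addrK.
split; first by apply: (T_sub H); [exact: T_tn | exact: (T_S1 H)].
move=> Ha; apply: (ti_notSB H).
have : T S t j.+1 (t ^+ j).
  rewrite -(subrK b (t ^+ j)); exact: (T_add H Ha Tb).
rewrite /T exprS; have tj := tn_neq0 H j; have t0 := t_neq0 H.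
have <- : t ^+ j / (t * t ^+ j) = t^-1 by field; rewrite t0 tj.
by [].
Qed.

Lemma inj_gap (K : fieldType) (S : K -> Prop) t (H : vsetup S t) (I : K -> Prop) c j :
  ideal S I -> (0 < c)%N -> (forall x, T S t c x -> I x) ->
  ~ (forall x, T S t c.-1 x -> I x) -> (j < c)%N -> Vp S t I j -> ~ Vp S t S (c - j.+1).
Proof.
move=> [IS sI] c0 TcI Hmin jc [x [Ix [Tx nTx]]] [s [Ss [Ts nTs]]].
have HS : subring S by case: H.
have [Tw nTw] := exact_mul H Ts nTs Tx nTx.
have Ec : (c - j.+1 + j)%N = c.-1 by lia.
rewrite Ec in Tw nTw.
have Iw : I (s * x) by case: sI => _ [_ Im]; apply: Im.
apply: Hmin => z Tz.
have Ec1 : c.-1.+1 = c by lia.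
case: (classic (T S t c z)) => Tcz; first exact: TcI.
rewrite -Ec1 in Tcz.
have [r [Sr Hr]] := residue H Tz Tcz Tw nTw.
rewrite Ec1 in Hr.
have -> : z = (z - r * (s * x)) - (- r) * (s * x) by rewrite mulNr opprK subrK.
apply: (submod_sub HS sI) => //; [exact: TcI | exact: S_opp].
Qed.

Lemma jdescent (K : fieldType) (S : K -> Prop) t (H : vsetup S t) (I J : K -> Prop) c :
  submod S I -> submod S J -> subset_ I J -> (forall x, J x -> Sbar S x) ->
  (forall x, T S t c x -> I x) -> forall y, J y -> ~ I y ->
  exists y' j, J y' /\ (j < c)%N /\ T S t j y' /\ ~ T S t j.+1 y' /\ ~ Vp S t I j.
Proof.
move=> sI sJ IJ JSB TcI.
have HS : subring S by case: H.
suff: forall n, (n <= c)%N -> forall y, J y -> ~ I y -> T S t (c - n) y ->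
  exists y' j, J y' /\ (j < c)%N /\ T S t j y' /\ ~ T S t j.+1 y' /\ ~ Vp S t I j.
  move=> Hn y Jy nIy; apply: (Hn c (leqnn c) y Jy nIy); rewrite subnn; apply/T0E; exact: JSB.
elim=> [|n IH] hn y Jy nIy Ty; first by rewrite subn0 in Ty; case: nIy; exact: TcI.
have hn' : (n <= c)%N by exact: ltnW.
case: (classic (T S t (c - n) y)) => Ty1; first exact: (IH hn' y Jy nIy Ty1).
have jc : (c - n.+1 < c)%N by lia.
have Ej : (c - n.+1).+1 = (c - n)%N by lia.
case: (classic (Vp S t I (c - n.+1))) => hV; last first.
  by exists y, (c - n.+1)%N; do 3!split => //; split; [by rewrite Ej | done].
case: hV => p [Ip [Tp nTp]].
have Ty1' : ~ T S t (c - n.+1).+1 y by rewrite Ej.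
have [s [Ss Hs]] := residue H Ty Ty1' Tp nTp.
rewrite Ej in Hs.
apply: (IH hn' (y - s * p)) => //.
  apply: (submod_sub HS sJ) => //; exact: IJ.
move=> Iy'; apply: nIy.
have -> : y = (y - s * p) - (- s) * p by rewrite mulNr opprK subrK.
apply: (submod_sub HS sI) => //; exact: S_opp.
Qed.

Lemma denom_list (K : fieldType) (S : K -> Prop) (HS : subring S) :
  (forall x, exists a b, S a /\ S b /\ b != 0 /\ x = a / b) ->
  forall l : seq K, exists b, S b /\ b != 0 /\ forall i, (i < size l)%N -> S (b * l`_i).
Proof.
move=> QF; elim=> [|x l [b [Sb [b0 Hb]]]].
  by exists 1; split; [exact: S_1 | split; [exact: oner_neq0 | by []]].
have [a [be [Sa [Sbe [be0 ->]]]]] := QF x.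
exists (b * be); split; first exact: S_mul.
split; first by rewrite mulf_neq0.
case=> [|i] /= hi.
  have -> : b * be * (a / be) = b * a by field. by apply: S_mul.
by rewrite mulrAC; apply: S_mul => //; apply: Hb.
Qed.

Lemma exists_c (K : fieldType) (S : K -> Prop) t (H : vsetup S t) (I : K -> Prop) (l : seq K) x0 :
  (forall x, exists a b, S a /\ S b /\ b != 0 /\ x = a / b) ->
  seteq (Sbar S) (spanS S l) -> n_primary S I -> nmax S x0 -> x0 != 0 ->
  exists k, forall x, T S t k x -> I x.
Proof.
move=> QF Hl [[IS sI] [nI1 [_ Hpow]]] nx0 x00.
have HS : subring S by case: H.
have [b [Sb [b0 Hb]]] := denom_list HS QF l.
have bSB : forall y, Sbar S y -> S (b * y).
  move=> y /Hl [cs [scs [Scs ->]]]; rewrite mulr_sumr; apply: S_sum => // i _.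
  by rewrite mulrCA; apply: (S_mul HS); [apply: Scs; rewrite scs | apply: Hb].
have [k Ik] := (Hpow x0 (proj1 nx0)).1 nx0.
set z := b * x0 ^+ k.
have z0 : z != 0 by rewrite mulf_neq0 // expf_neq0.
have zI : forall y, Sbar S y -> I (z * y).
  move=> y Hy; rewrite /z mulrAC; case: sI => _ [_ Im]; apply: Im => //; exact: bSB.
have Sz : S z by apply: S_mul => //; apply: IS.
have [N nTN] := val_fin H z0.
have [j [_ [Tj nTj]]] := exact_exists H (proj2 (T0E S t z) (SB_S H Sz)) nTN.
exists j => w Tw.
have [_ Hui] := unit_lemma H Tj (fun h => nTj ((T1_shift H j z).1 h)).
have -> : w = z * ((w / t ^+ j) * (z / t ^+ j)^-1).
  have tj := tn_neq0 H j; by field; rewrite z0 tj.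
by apply: zI; apply: (SB_mul H).
Qed.


Theorem proposition4p18 (K : fieldType) (S : K -> Prop) (t : K) :
  setting S t -> sparse_stretched S -> canonical_stretched S.
Proof.
move=> [HS [QF [Hnmax [_ [[x0 [nx0 x00]] [_ [_ [_ [Ht [t0 [Hti [FAC [[l Hl] [RES _]]]]]]]]]]]]]].
have H : vsetup S t by split; [|split; [|split; [|split; [|split]]]].
move=> [I [[HnpI [d [[_ Hd1] [[ch0 Hch0] _]]]] [HIn2 Hstr]]].
exists I; split; last by split.
have HnpI' := HnpI; case: HnpI' => [[IS sI] [nI1 _]].
have Hex : exists k, pb (forall x, T S t k x -> I x).
  have [k Hk] := exists_c H QF Hl HnpI nx0 x00; by exists k; apply/pbP.
case: (ex_minnP Hex) => c /pbP TcI Hmin.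
have c0 : (0 < c)%N.
  rewrite lt0n; apply/negP => /eqP c0; apply: nI1; apply: TcI; rewrite c0.
  apply/T0E; apply: (SB_S H); exact: S_1.
have Hmin' : ~ (forall x, T S t c.-1 x -> I x).
  move=> h; have := Hmin c.-1 (introT (pbP _) h); lia.
have ISB : forall x, I x -> Sbar S x by move=> x /IS; exact: (SB_S H).
have dle : (d <= #|Vset S t I c|)%N.
  apply: (chainV H Hch0) => // x Tx y Hy; apply: TcI; exact: (T_mulSB H).
have gle := gapchain H (fun x h => IS x (TcI x h)) Hd1.
set G := [set j : 'I_c | pb (~ Vp S t S j)] in gle.
have imG : [set rev_ord j | j in Vset S t I c] \subset G.
  apply/subsetP => y /imsetP [j]; rewrite inE => /pbP Vj ->.
  rewrite inE; apply/pbP => /=.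
  exact: (inj_gap H (conj IS sI) c0 TcI Hmin' (ltn_ord j) Vj).
have EG : [set rev_ord j | j in Vset S t I c] = G.
  apply/eqP; rewrite eqEcard imG /= card_imset; last exact: rev_ord_inj.
  exact: (leq_trans gle dle).
have bij : forall j : 'I_c, ~ Vp S t I j -> Vp S t S (c - j.+1).
  move=> j nVj; apply: NNPP => nV.
  have : rev_ord j \in G by rewrite inE; apply/pbP.
  rewrite -EG => /imsetP [j' Vj' Ej]; move/rev_ord_inj: Ej => Ej.
  by move: Vj'; rewrite -Ej inE => /pbP.
split; first by [].
move=> [J1 [J2 [HJ1 [HJ2 [[sub1 nsub1] [[sub2 nsub2] Heq]]]]]].
have Ec1 : c.-1.+1 = c by lia.
have key : forall J : K -> Prop, ideal S J -> subset_ I J -> ~ subset_ J I ->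
    exists w, J w /\ T S t c.-1 w /\ ~ T S t c w.
  move=> J [JS sJ] IJ nJI.
  have [y [Jy nIy]] : exists y, J y /\ ~ I y.
    apply: NNPP => hn; apply: nJI => y Jy; apply: NNPP => nIy; apply: hn; by exists y.
  have [y' [j [Jy' [jc [Ty' [nTy' nVj]]]]]] :=
    jdescent H sI sJ IJ (fun x h => SB_S H (JS x h)) TcI Jy nIy.
  have [s [Ss [Ts nTs]]] := bij (Ordinal jc) nVj.
  have [Tw nTw] := exact_mul H Ts nTs Ty' nTy'.
  have Ec : (c - j.+1 + j)%N = c.-1 by lia.
  exists (s * y'); split; first by case: sJ => _ [_ Jm]; apply: Jm.
  split; first by rewrite -Ec; exact: Tw.
  by rewrite -Ec1 -Ec; exact: nTw.
have [w1 [Jw1 [Tw1 nTw1]]] := key J1 HJ1 sub1 nsub1.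
have [w2 [Jw2 [Tw2 nTw2]]] := key J2 HJ2 sub2 nsub2.
rewrite -Ec1 in nTw1 nTw2.
have [r [Sr Hr]] := residue H Tw1 nTw1 Tw2 nTw2.
rewrite Ec1 in Hr.
have J2w1 : J2 w1.
  have -> : w1 = (w1 - r * w2) - (- r) * w2 by rewrite mulNr opprK subrK.
  apply: (submod_sub HS (proj2 HJ2)) => //; first by apply: sub2; apply: TcI.
  exact: S_opp.
have Iw1 : I w1 by apply/Heq.
have cc : (c.-1 < c)%N by lia.
have := inj_gap H (conj IS sI) c0 TcI Hmin' cc (ex_intro _ w1 (conj Iw1 (conj Tw1 nTw1))).
rewrite Ec1 subnn; apply; exists 1; split; first exact: S_1.
split; first by apply/T0E; apply: (SB_S H); exact: S_1.
by rewrite /T expr1 mul1r.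
Qed.
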